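(* Let $p\ge 2$ be an integer and $\eta>0$. Then the function $\tau_\ell^-$ is strictly decreasing on $[0,1]$.
   Context: For an integer $p\ge 2$ and a real parameter $\eta>-1$, define for $\tau\ge 0$ and $s\in[-1,1]$ $$\ell_-(\tau,s)=\cos\tau\,\sin\!\Big(\tau\eta s-\tfrac{\pi}{p}\Big)+s\sin\tau\,\cos\!\Big(\tau\eta s-\tfrac{\pi}{p}\Big),$$ and let $\tau_\ell^-(s)$ be the smallest positive root in $\tau$ of $\ell_-(\tau,s)=0$. *)

(* Defs.v *)
From Stdlib Require Import Reals.
Open Scope R_scope.

Definition ell_minus (p : nat) (eta tau s : R) : R :=
  cos tau * sin (tau * eta * s - PI / INR p)
  + s * sin tau * cos (tau * eta * s - PI / INR p).

Definition smallest_pos_root (f : R -> R) (t : R) : Prop :=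
  0 < t /\ f t = 0 /\ (forall u, 0 < u < t -> f u <> 0).

(* Main.v *)
Require Import Defs.
From Stdlib Require Import Reals Lra Classical.
Open Scope R_scope.

Lemma cont_ell p eta s : continuity (fun tau => ell_minus p eta tau s).
Proof. unfold ell_minus. reg. Qed.

Lemma cont_eps f x : continuity_pt f x -> forall eps, eps > 0 ->
  exists d, d > 0 /\ forall y, Rabs (y - x) < d -> Rabs (f y - f x) < eps.
Proof.
  intros H e He; destruct (H e He) as [d [Hd Hx]]; exists d; split; auto.
  intros y Hy; destruct (Req_dec y x).
  - subst; unfold Rminus; rewrite Rplus_opp_r, Rabs_R0; lra.
  - apply Hx; split; [split; [constructor | auto] | simpl; unfold R_dist; auto].
Qed.

Lemma smallest_exists f T : continuity f -> f 0 < 0 -> 0 < T -> 0 <= f T ->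
  exists t, smallest_pos_root f t.
Proof.
  intros Hc H0 HT HfT.
  set (E := fun x => 0 <= x <= T /\ forall y, 0 <= y <= x -> f y < 0).
  assert (HE0 : E 0). { split; [lra|]. intros y Hy. replace y with 0 by lra. auto. }
  assert (Hb : bound E). { exists T. intros x [Hx _]; lra. }
  destruct (completeness E Hb (ex_intro _ 0 HE0)) as [t [Hub Hlub]].
  assert (Ht0 : 0 <= t) by (apply Hub; auto).
  assert (HtT : t <= T). { apply Hlub. intros x [Hx _]; lra. }
  assert (Hbel : forall y, 0 <= y < t -> f y < 0).
  { intros y Hy. apply Rnot_le_lt. intros Hfy.
    assert (t <= y); [|lra].
    apply Hlub. intros x [Hx Hx2]. apply Rnot_lt_le. intros Hxy.
    specialize (Hx2 y ltac:(lra)). lra. }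
  assert (Hle : f t <= 0).
  { apply Rnot_lt_le; intros Hpos.
    destruct (Req_dec t 0) as [Z|Z]. { subst; lra. }
    destruct (cont_eps f t (Hc t) (f t) Hpos) as [d [Hd Hdd]].
    set (y := Rmax 0 (t - d/2)).
    assert (Hy1 : 0 <= y) by apply Rmax_l.
    assert (Hy2 : y < t) by (unfold y; apply Rmax_lub_lt; lra).
    assert (Hy3 : Rabs (y - t) < d).
    { rewrite Rabs_left by lra. assert (t - d/2 <= y) by apply Rmax_r. lra. }
    specialize (Hdd y Hy3). specialize (Hbel y ltac:(lra)).
    apply Rabs_def2 in Hdd. lra. }
  assert (Heq : f t = 0).
  { destruct (Rle_lt_or_eq_dec _ _ Hle) as [Hneg|]; auto. exfalso.
    assert (HtT' : t < T). { destruct (Rle_lt_or_eq_dec _ _ HtT); auto. subst; lra. }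
    assert (Hp : - f t > 0) by lra.
    destruct (cont_eps f t (Hc t) (- f t) Hp) as [d [Hd Hdd]].
    set (x := Rmin T (t + d/2)).
    assert (Hx1 : t < x) by (unfold x; apply Rmin_glb_lt; lra).
    assert (Hx2 : x <= T) by apply Rmin_l.
    assert (Hx3 : x <= t + d/2) by apply Rmin_r.
    assert (E x).
    { split; [lra|]. intros y Hy.
      destruct (Rlt_or_le y t) as [Hyt|Hyt]; [apply Hbel; lra|].
      assert (Rabs (y - t) < d) by (rewrite Rabs_right by lra; lra).
      specialize (Hdd y H). apply Rabs_def2 in Hdd. lra. }
    specialize (Hub x H). lra. }
  exists t. split; [|split; auto].
  - destruct (Rle_lt_or_eq_dec _ _ Ht0); auto. subst. lra.
  - intros u Hu. specialize (Hbel u ltac:(lra)). lra.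
Qed.

Lemma root_in f T : continuity f -> f 0 < 0 -> 0 < T -> 0 < f T ->
  exists z, 0 < z < T /\ f z = 0.
Proof.
  intros Hc H0 HT HfT. destruct (IVT f 0 T Hc HT H0 HfT) as [z [Hz Hfz]].
  exists z; split; auto. split.
  - destruct (Rle_lt_or_eq_dec 0 z) as [|E]; [lra|auto|subst; lra].
  - destruct (Rle_lt_or_eq_dec z T) as [|E]; [lra|auto|subst; lra].
Qed.

Lemma root_le f T : continuity f -> f 0 < 0 -> 0 < T -> 0 <= f T ->
  forall t, smallest_pos_root f t -> t <= T.
Proof.
  intros Hc H0 HT HfT t [Ht [Hft Hmin]].
  destruct (Rle_lt_or_eq_dec _ _ HfT) as [Hp|Hz].
  - destruct (root_in f T Hc H0 HT Hp) as [z [Hz Hfz]].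
    apply Rnot_lt_le; intro. apply (Hmin z); auto; lra.
  - apply Rnot_lt_le; intro. apply (Hmin T); auto; lra.
Qed.

Section A.
Variables (p : nat) (eta : R) (hp : (2 <= p)%nat) (heta : 0 < eta).
Let a := PI / INR p.

Lemma a_bounds : 0 < a /\ a <= PI / 2.
Proof.
  assert (H2 : 2 <= INR p) by (replace 2 with (INR 2) by (simpl; lra); apply le_INR; auto).
  pose proof PI_RGT_0. unfold a. split.
  - apply Rdiv_lt_0_compat; lra.
  - unfold Rdiv. apply Rmult_le_compat_l; [lra|]. apply Rinv_le_contravar; lra.
Qed.

Lemma ell0 s : ell_minus p eta 0 s < 0.
Proof.
  unfold ell_minus. rewrite cos_0, sin_0.
  replace (0 * eta * s - PI / INR p) with (- a) by (unfold a; ring).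
  destruct a_bounds. pose proof PI_RGT_0.
  assert (sin (-a) < 0) by (apply sin_lt_0_var; lra). nra.
Qed.

Lemma exT s : 0 <= s <= 1 -> exists T, 0 < T <= PI/2 /\ T * eta * s <= a /\
  0 <= ell_minus p eta T s.
Proof.
  intros Hs. destruct a_bounds as [Ha1 Ha2]. pose proof PI_RGT_0.
  destruct (Rle_or_lt (PI/2 * eta * s) a) as [HA|HB].
  - exists (PI/2). split; [lra|split; auto].
    unfold ell_minus. rewrite cos_PI2, sin_PI2. fold a.
    assert (0 <= PI/2*eta*s) by (apply Rmult_le_pos; [|lra]; apply Rmult_le_pos; lra).
    assert (0 <= cos (PI / 2 * eta * s - a)) by (apply cos_ge_0; lra). nra.
  - assert (Hs0 : 0 < s).
    { destruct (Rle_lt_or_eq_dec 0 s) as [|E]; [lra|auto|subst; lra]. }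
    assert (Hes : 0 < eta * s) by nra.
    exists (a / (eta * s)).
    assert (HT : a / (eta * s) < PI/2).
    { apply (Rmult_lt_reg_r (eta * s)); auto. unfold Rdiv.
      rewrite Rmult_assoc, Rinv_l by lra. lra. }
    assert (HT0 : 0 < a / (eta * s)) by (apply Rdiv_lt_0_compat; lra).
    assert (Heq : a / (eta * s) * eta * s = a) by (field; lra).
    split; [lra|split; [lra|]].
    unfold ell_minus. fold a. rewrite Heq, Rminus_diag, sin_0, cos_0.
    assert (0 <= sin (a / (eta*s))) by (apply sin_ge_0; lra). nra.
Qed.

Lemma part1 s : 0 <= s <= 1 ->
  exists t, smallest_pos_root (fun tau => ell_minus p eta tau s) t.
Proof.
  intros Hs. destruct (exT s Hs) as [T [HT [_ HfT]]].
  apply (smallest_exists _ T (cont_ell p eta s) (ell0 s)); auto; lra.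
Qed.

Lemma part2 s1 s2 t1 t2 : 0 <= s1 -> s1 < s2 -> s2 <= 1 ->
  smallest_pos_root (fun tau => ell_minus p eta tau s1) t1 ->
  smallest_pos_root (fun tau => ell_minus p eta tau s2) t2 -> t2 < t1.
Proof.
  intros H1 H12 H2 R1 R2.
  destruct a_bounds as [Ha1 Ha2]. pose proof PI_RGT_0.
  destruct (exT s1 ltac:(lra)) as [T [HT [HTa HfT]]].
  pose proof (root_le _ T (cont_ell p eta s1) (ell0 s1) ltac:(lra) HfT t1 R1) as Ht1T.
  pose proof R1 as [Ht1 [Hf1 _]]. simpl in Hf1.
  assert (Ht1a : t1 * eta * s1 <= a).
  { assert (t1 * eta * s1 <= T * eta * s1); [|lra].
    apply Rmult_le_compat_r; auto. apply Rmult_le_compat_r; lra. }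
  assert (Hes : 0 < eta * s2) by nra.
  assert (exists tp, 0 < tp <= t1 /\ 0 < ell_minus p eta tp s2) as [tp [Htp Hftp]].
  { destruct (Rlt_or_le (a / (eta * s2)) t1) as [C1|C2].
    - exists (a / (eta * s2)).
      assert (HT0 : 0 < a / (eta * s2)) by (apply Rdiv_lt_0_compat; lra).
      assert (Heq : a / (eta * s2) * eta * s2 = a) by (field; lra).
      split; [lra|].
      unfold ell_minus. fold a. rewrite Heq, Rminus_diag, sin_0, cos_0.
      assert (0 < sin (a / (eta*s2))) by (apply sin_gt_0; lra). nra.
    - exists t1. split; [lra|].
      assert (Hc2 : t1 * eta * s2 <= a).
      { apply (Rmult_le_compat_r (eta * s2)) in C2; [|lra].
        unfold Rdiv in C2. rewrite Rmult_assoc, Rinv_l in C2 by lra. lra. }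
      unfold ell_minus in *. fold a in Hf1 |- *.
      set (th1 := t1 * eta * s1 - a) in *.
      set (th2 := t1 * eta * s2 - a).
      assert (Hth : th1 < th2).
      { unfold th1, th2. assert (t1 * eta * s1 < t1 * eta * s2); [|lra].
        apply Rmult_lt_compat_l; auto. apply Rmult_lt_0_compat; lra. }
      assert (th1 >= -a) by (unfold th1; assert (0 <= t1*eta*s1) by (apply Rmult_le_pos; [|lra]; apply Rmult_le_pos; lra); lra).
      assert (th2 <= 0) by (unfold th2; lra).
      assert (Hsn : sin th1 < sin th2) by (apply sin_increasing_1; lra).
      assert (Hcs : cos th1 <= cos th2).
      { rewrite <- (cos_neg th1), <- (cos_neg th2).
        destruct (Req_dec th2 0) as [E|E].
        - rewrite E, Ropp_0, cos_0. apply COS_bound.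
        - left. apply cos_decreasing_1; lra. }
      assert (Hc1 : 0 <= cos th1) by (apply cos_ge_0; lra).
      assert (Hc2' : 0 < cos th2) by (apply cos_gt_0; lra).
      assert (Hct : 0 <= cos t1) by (apply cos_ge_0; lra).
      assert (Hst : 0 < sin t1) by (apply sin_gt_0; lra).
      assert (s1 * cos th1 < s2 * cos th2) by nra.
      assert (cos t1 * sin th1 <= cos t1 * sin th2) by nra.
      assert (s1 * sin t1 * cos th1 < s2 * sin t1 * cos th2) by nra.
      lra. }
  destruct (root_in _ tp (cont_ell p eta s2) (ell0 s2) ltac:(lra) Hftp) as [z [Hz Hfz]].
  destruct R2 as [Ht2 [Hf2 Hmin2]].
  apply Rnot_le_lt; intro. apply (Hmin2 z); auto; lra.
Qed.
End A.

Theorem mainTheorem6 (p : nat) (eta : R) (hp : (2 <= p)%nat) (heta : 0 < eta) :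
  (forall s, 0 <= s <= 1 ->
     exists t, smallest_pos_root (fun tau => ell_minus p eta tau s) t) /\
  (forall s1 s2 t1 t2, 0 <= s1 -> s1 < s2 -> s2 <= 1 ->
     smallest_pos_root (fun tau => ell_minus p eta tau s1) t1 ->
     smallest_pos_root (fun tau => ell_minus p eta tau s2) t2 ->
     t2 < t1).
Proof.
  split.
  - apply part1; auto.
  - apply part2; auto.
Qed.
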